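(* Let $\mathsf{Prop}$ be a non-empty set of propositions and $\mathsf{L}$ any fragment of $\mathsf{LTL}(\mathsf{Prop})$. Let $\mathcal{S}=(\mathcal{P},\mathcal{N})$ be a sample of words in $\mathcal{W}(\mathsf{Prop})$, each $w\in\mathcal{P}\cup\mathcal{N}$ given as $w=u_w\cdot v_w^\omega$ with $u_w,v_w\in(2^{\mathsf{Prop}})^*$, $u_wv_w\neq\varepsilon$. If there is an $\mathcal{S}$-separating $\mathsf{L}$-formula, then there is one of size at most $2^n$, where $n:=\sum_{w\in\mathcal{P}\cup\mathcal{N}}(|u_w|+|v_w|)$.
   Context: $\mathsf{LTL}(\mathsf{Prop})$-formulas: $\varphi::=p\mid\neg\varphi\mid\varphi\vee\varphi\mid\varphi\wedge\varphi\mid\mathbf{X}\varphi\mid\mathbf{F}\varphi\mid\mathbf{G}\varphi\mid\varphi\,\mathbf{U}\,\varphi$, $p\in\mathsf{Prop}$. A fragment is given by a subset of these operators; its formulas are those using only them. $\mathsf{sz}(\varphi)$ is the number of distinct subformulas. $\mathcal{W}(\mathsf{Prop})=\{u\cdot v^\omega: u,v\in(2^{\mathsf{Prop}})^*,\ u\cdot v\ne\varepsilon\}$, where for $v=\varepsilon$ this denotes the finite word $u$. For a word $w$, $|w|\in\mathbb{N}\cup\{\infty\}$ is its length, $w[j]$ its $j$-th letter and $w[j:]$ its suffix from position $j$. Semantics: $w\models p$ iff $p\in w[0]$; Boolean connectives as usual; $w\models\mathbf{X}\varphi$ iff $|w|\ge2$ and $w[1:]\models\varphi$; $w\models\mathbf{F}\varphi$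 iff $\exists j<|w|$, $w[j:]\models\varphi$; $w\models\mathbf{G}\varphi$ iff $\forall j<|w|$, $w[j:]\models\varphi$; $w\models\varphi_1\mathbf{U}\varphi_2$ iff $\exists j<|w|$ with $w[j:]\models\varphi_2$ and $w[k:]\models\varphi_1$ for all $k<j$. A sample is a pair of finite sets of words; a formula is $\mathcal{S}$-separating if satisfied by every word in $\mathcal{P}$ and by none in $\mathcal{N}$. *)

(* Defs.v *)
From HB Require Import structures.
From mathcomp Require Import all_boot.
From Stdlib Require List.
Set Implicit Arguments. Unset Strict Implicit. Unset Printing Implicit Defensive.

Section LTL.
Variable AP : eqType.

Inductive form : Type :=
| FAtom of AP
| FNot of form
| FOr of form & form
| FAnd of form & form
| FX of form
| FF of form
| FG of form
| FU of form & form.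

Fixpoint form_eqb (f g : form) : bool :=
  match f, g with
  | FAtom p, FAtom q => p == q
  | FNot a, FNot b => form_eqb a b
  | FOr a1 a2, FOr b1 b2 => form_eqb a1 b1 && form_eqb a2 b2
  | FAnd a1 a2, FAnd b1 b2 => form_eqb a1 b1 && form_eqb a2 b2
  | FX a, FX b => form_eqb a b
  | FF a, FF b => form_eqb a b
  | FG a, FG b => form_eqb a b
  | FU a1 a2, FU b1 b2 => form_eqb a1 b1 && form_eqb a2 b2
  | _, _ => false
  end.

Lemma form_eqP : Equality.axiom form_eqb.
Proof.
elim=> [p|a IHa|a1 IH1 a2 IH2|a1 IH1 a2 IH2|a IHa|a IHa|a IHa|a1 IH1 a2 IH2]
  [q|b|b1 b2|b1 b2|b|b|b|b1 b2] /=; try by constructor.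
- by apply: (iffP eqP) => [->|[]].
- by apply: (iffP (IHa b)) => [->|[]].
- by apply: (iffP andP) => [[/IH1 -> /IH2 ->]|[<- <-]]; split; [apply/IH1|apply/IH2].
- by apply: (iffP andP) => [[/IH1 -> /IH2 ->]|[<- <-]]; split; [apply/IH1|apply/IH2].
- by apply: (iffP (IHa b)) => [->|[]].
- by apply: (iffP (IHa b)) => [->|[]].
- by apply: (iffP (IHa b)) => [->|[]].
- by apply: (iffP andP) => [[/IH1 -> /IH2 ->]|[<- <-]]; split; [apply/IH1|apply/IH2].
Qed.

HB.instance Definition _ := hasDecEq.Build form form_eqP.

(* The (non-atomic) operators; a fragment is a subset of them. *)
Inductive op : Type := ONot | OOr | OAnd | OX | OF | OG | OU.

Fixpoint in_frag (L : op -> bool) (f : form) : bool :=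
  match f with
  | FAtom _ => true
  | FNot a => L ONot && in_frag L a
  | FOr a b => [&& L OOr, in_frag L a & in_frag L b]
  | FAnd a b => [&& L OAnd, in_frag L a & in_frag L b]
  | FX a => L OX && in_frag L a
  | FF a => L OF && in_frag L a
  | FG a => L OG && in_frag L a
  | FU a b => [&& L OU, in_frag L a & in_frag L b]
  end.

Fixpoint subforms (f : form) : seq form :=
  f :: match f with
       | FAtom _ => [::]
       | FNot a | FX a | FF a | FG a => subforms a
       | FOr a b | FAnd a b | FU a b => subforms a ++ subforms b
       end.

Definition sz (f : form) : nat := size (undup (subforms f)).

Definition letter := AP -> bool.

(* a word u . v^omega given by its pair (u, v); v = [::] means the finite word u *)
Record word := Word { wu : seq letter; wv : seq letter }.

Definition wf_word (w : word) : Prop := wu w ++ wv w <> [::].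

Definition wat (w : word) (j : nat) : letter :=
  if j < size (wu w) then nth (fun _ => false) (wu w) j
  else nth (fun _ => false) (wv w) ((j - size (wu w)) %% size (wv w)).

(* j < |w|  (|w| = infinity when v is non-empty) *)
Definition inlen (w : word) (j : nat) : Prop :=
  wv w = [::] -> j < size (wu w).

Fixpoint sat (w : word) (i : nat) (f : form) : Prop :=
  match f with
  | FAtom p => wat w i p
  | FNot a => ~ sat w i a
  | FOr a b => sat w i a \/ sat w i b
  | FAnd a b => sat w i a /\ sat w i b
  | FX a => inlen w i.+1 /\ sat w i.+1 a
  | FF a => exists j, i <= j /\ inlen w j /\ sat w j a
  | FG a => forall j, i <= j -> inlen w j -> sat w j a
  | FU a b => exists j, [/\ i <= j, inlen w j, sat w j b &
                          forall k, i <= k -> k < j -> sat w k a]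
  end.

Definition models (w : word) (f : form) : Prop := sat w 0 f.

Definition separating (P N : seq word) (f : form) : Prop :=
  (forall w, List.In w P -> models w f) /\ (forall w, List.In w N -> ~ models w f).

Definition sample_size (P N : seq word) : nat :=
  \sum_(w <- P ++ N) (size (wu w) + size (wv w)).

End LTL.

(* Main.v *)
Require Import Defs.
From HB Require Import structures.
From mathcomp Require Import all_boot.
From Stdlib Require List.
From Stdlib Require Import Classical ClassicalEpsilon.
From mathcomp Require Import zify.

Set Implicit Arguments. Unset Strict Implicit. Unset Printing Implicit Defensive.

Lemma sub_refl {AP : eqType} (x : form AP) : x \in subforms x.
Proof. by case: x => *; rewrite /= mem_head. Qed.

Lemma sub_trans {AP : eqType} (x y z : form AP) :
  x \in subforms y -> y \in subforms z -> x \in subforms z.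
Proof.
move=> hx; elim: z => [p|a IHa|a IHa b IHb|a IHa b IHb|a IHa|a IHa|a IHa|a IHa b IHb] hy;
move: (hy); rewrite [subforms _]/= in_cons => /orP [/eqP e|]; try (by rewrite e in hx);
rewrite /= ?mem_cat //;
try (by move=> h; rewrite in_cons (IHa h) ?orbT);
by case/orP=> h; rewrite in_cons mem_cat ?(IHa h) ?(IHb h) ?orbT.
Qed.

Fixpoint fsize {AP : eqType} (f : form AP) : nat :=
  match f with
  | FAtom _ => 1
  | FNot a | FX a | FF a | FG a => (fsize a).+1
  | FOr a b | FAnd a b | FU a b => (fsize a + fsize b).+1
  end.

Lemma sub_fsize {AP : eqType} (x y : form AP) :
  x \in subforms y -> fsize x <= fsize y.
Proof.
elim: y => [p|a IHa|a IHa b IHb|a IHa b IHb|a IHa|a IHa|a IHa|a IHa b IHb] /=;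
rewrite in_cons => /orP [/eqP -> //|]; rewrite ?mem_cat //;
try (by move=> /IHa h; apply: leqW);
try (by case/orP=> [/IHa|/IHb] h; apply: leqW; [apply: leq_trans h (leq_addr _ _)|apply: leq_trans h (leq_addl _ _)]).
Qed.

Lemma sub_fsize_lt {AP : eqType} (x y : form AP) :
  x \in subforms y -> x <> y -> fsize x < fsize y.
Proof.
case: y => [p|a|a b|a b|a|a|a|a b] /=;
rewrite in_cons => /orP [/eqP -> //|]; rewrite ?mem_cat //;
try (by move=> /sub_fsize h _; rewrite ltnS);
try (by case/orP=> /sub_fsize h _; rewrite ltnS; [apply: leq_trans h (leq_addr _ _)|apply: leq_trans h (leq_addl _ _)]).
Qed.

Lemma in_frag_sub {AP : eqType} L (x y : form AP) :
  x \in subforms y -> in_frag L y -> in_frag L x.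
Proof.
elim: y => [p|a IHa|a IHa b IHb|a IHa b IHb|a IHa|a IHa|a IHa|a IHa b IHb] /=;
rewrite in_cons => /orP [/eqP -> //|]; rewrite ?mem_cat //;
try (by move=> /IHa h /andP[_ /h]);
try (by case/orP=> [/IHa|/IHb] h /and3P[_ ha hb]; auto).
Qed.

Fixpoint subst {AP : eqType} (p2 p1 f : form AP) : form AP :=
  if f == p2 then p1 else
  match f with
  | FAtom p => FAtom p
  | FNot a => FNot (subst p2 p1 a)
  | FOr a b => FOr (subst p2 p1 a) (subst p2 p1 b)
  | FAnd a b => FAnd (subst p2 p1 a) (subst p2 p1 b)
  | FX a => FX (subst p2 p1 a)
  | FF a => FF (subst p2 p1 a)
  | FG a => FG (subst p2 p1 a)
  | FU a b => FU (subst p2 p1 a) (subst p2 p1 b)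
  end.

Lemma subst_id {AP : eqType} (p2 p1 z : form AP) :
  p2 \notin subforms z -> subst p2 p1 z = z.
Proof.
elim: z => [p|a IHa|a IHa b IHb|a IHa b IHb|a IHa|a IHa|a IHa|a IHa b IHb] /=;
rewrite in_cons ?mem_cat negb_or => /andP[ne h];
rewrite eq_sym (negbTE ne) //;
try (by rewrite IHa);
by move: h; rewrite negb_or => /andP[h1 h2]; rewrite IHa // IHb.
Qed.

Lemma in_frag_subst {AP : eqType} L (p2 p1 f : form AP) :
  in_frag L p1 -> in_frag L f -> in_frag L (subst p2 p1 f).
Proof.
move=> h1.
elim: f => [p|a IHa|a IHa b IHb|a IHa b IHb|a IHa|a IHa|a IHa|a IHa b IHb] /=;
case: ifP => _ //=;
try (by move=> /andP[-> /IHa ->]);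
by move=> /and3P[-> /IHa -> /IHb ->].
Qed.

Lemma sub_subst {AP : eqType} (p2 p1 f : form AP) :
  {subset subforms (subst p2 p1 f) <= map (subst p2 p1) (subforms f) ++ subforms p1}.
Proof.
elim: f => [p|a IHa|a IHa b IHb|a IHa b IHb|a IHa|a IHa|a IHa|a IHa b IHb] z;
rewrite [subst _ _ _]/=; (case: ifP => [_ hz|hne]; first by rewrite mem_cat hz orbT);
rewrite [subforms _]/= in_cons ?mem_cat => /orP[/eqP ->|] //;
try (by rewrite ?mem_cat; apply/orP; left; apply/mapP; eexists; [apply: mem_head|rewrite /= hne]);
try (by move=> /IHa; rewrite !mem_cat => /orP[/mapP[u hu ->]|->]; rewrite ?orbT //;
        apply/orP; left; apply/mapP; exists u => //; rewrite in_cons hu orbT);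
by case/orP => [/IHa|/IHb]; rewrite !mem_cat => /orP[/mapP[u hu ->]|->]; rewrite ?orbT //;
        apply/orP; left; apply/mapP; exists u => //; rewrite in_cons mem_cat hu ?orbT.
Qed.

Lemma substE {AP : eqType} (p2 p1 f : form AP) : subst p2 p1 f =
  if f == p2 then p1 else
  match f with
  | FAtom p => FAtom p
  | FNot a => FNot (subst p2 p1 a)
  | FOr a b => FOr (subst p2 p1 a) (subst p2 p1 b)
  | FAnd a b => FAnd (subst p2 p1 a) (subst p2 p1 b)
  | FX a => FX (subst p2 p1 a)
  | FF a => FF (subst p2 p1 a)
  | FG a => FG (subst p2 p1 a)
  | FU a b => FU (subst p2 p1 a) (subst p2 p1 b)
  end.
Proof. by case: f. Qed.

Lemma subst_self {AP : eqType} (p2 p1 : form AP) : subst p2 p1 p2 = p1.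
Proof. by case: p2 => * /=; rewrite eqxx. Qed.

Lemma inlen_le {AP : eqType} (w : word AP) j k : inlen w j -> k <= j -> inlen w k.
Proof. by rewrite /inlen => h hk e; exact: leq_ltn_trans hk (h e). Qed.

Lemma inlen_inf {AP : eqType} (w : word AP) j : wv w <> [::] -> inlen w j.
Proof. by move=> h /h. Qed.

Lemma sat_subst {AP : eqType} (w : word AP) (p2 p1 : form AP) :
  (forall i, inlen w i -> (sat w i p1 <-> sat w i p2)) ->
  forall f i, inlen w i -> (sat w i (subst p2 p1 f) <-> sat w i f).
Proof.
move=> H.
elim=> [p|a IHa|a IHa b IHb|a IHa b IHb|a IHa|a IHa|a IHa|a IHa b IHb] i hi;
rewrite substE; (case: eqP => [e|_]; first by rewrite e; apply: H); rewrite /=.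
- by [].
- by have := IHa i hi; tauto.
- by have := IHa i hi; have := IHb i hi; tauto.
- by have := IHa i hi; have := IHb i hi; tauto.
- by have := IHa i.+1; tauto.
- split=> -[j [hij [hj hs]]]; exists j; (split; [done|split; [done|]]); by move: hs => /(IHa j hj).
- split=> h j hij hj; by move: (h j hij hj) => /(IHa j hj).
- split=> -[j [hij hj hs hk]]; exists j; split=> //.
  + by move: hs => /(IHb j hj).
  + move=> k hik hkj; have hkl : inlen w k := inlen_le hj (ltnW hkj).
    by move: (hk k hik hkj) => /(IHa k hkl).
  + by move: hs => /(IHb j hj).
  + move=> k hik hkj; have hkl : inlen w k := inlen_le hj (ltnW hkj).
    by move: (hk k hik hkj) => /(IHa k hkl).
Qed.

Lemma wat_shift {AP : eqType} (w : word AP) i :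
  size (wu w) <= i -> wat w (i + size (wv w)) = wat w i.
Proof.
move=> hi; rewrite /wat ltnNge (leq_trans hi (leq_addr _ _)) /= ltnNge hi /=.
by rewrite addnC -addnBA // modnDl.
Qed.

Lemma sat_shift {AP : eqType} (w : word AP) (hv : wv w <> [::]) f :
  forall i, size (wu w) <= i -> (sat w (i + size (wv w)) f <-> sat w i f).
Proof.
elim: f => [p|a IHa|a IHa b IHb|a IHa b IHb|a IHa|a IHa|a IHa|a IHa b IHb] i hi /=.
- by rewrite wat_shift.
- by have := IHa i hi; tauto.
- by have := IHa i hi; have := IHb i hi; tauto.
- by have := IHa i hi; have := IHb i hi; tauto.
- have := IHa i.+1 (leqW hi); rewrite addSn.
  have := inlen_inf (i + size (wv w)).+1 hv; have := inlen_inf i.+1 hv; tauto.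
- split=> -[j [hij [_ hs]]].
  + exists (j - size (wv w)); split; first by lia.
    split; first exact: inlen_inf.
    have hj : size (wu w) <= j - size (wv w) by lia.
    by move: (IHa _ hj); rewrite subnK ?(leq_trans (leq_addl _ _) hij) // => /iffLR; apply.
  + exists (j + size (wv w)); split; first by lia.
    split; first exact: inlen_inf.
    by apply/(IHa j (leq_trans hi hij)).
- split=> h j hij hj.
  + have hj' : size (wu w) <= j by lia.
    apply/(IHa j hj'); apply: h; [lia|exact: inlen_inf].
  + have hj' : size (wu w) <= j - size (wv w) by lia.
    move: (IHa _ hj'); rewrite subnK ?(leq_trans (leq_addl _ _) hij) // => /iffRL; apply.
    apply: h; [lia|exact: inlen_inf].
- split=> -[j [hij hj hs hk]].
  + have hj' : size (wu w) <= j - size (wv w) by lia.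
    exists (j - size (wv w)); split; [lia|exact: inlen_inf| |].
    * by move: (IHb _ hj'); rewrite subnK ?(leq_trans (leq_addl _ _) hij) // => /iffLR; apply.
    * move=> k hik hkj; have hk' : size (wu w) <= k by lia.
      apply/(IHa k hk'); apply: hk; lia.
  + exists (j + size (wv w)); split; [lia|exact: inlen_inf| |].
    * by apply/(IHb j (leq_trans hi hij)).
    * move=> k hik hkj; have hk' : size (wu w) <= k - size (wv w) by lia.
      move: (IHa _ hk'); rewrite subnK ?(leq_trans (leq_addl _ _) hik) // => /iffRL; apply.
      apply: hk; lia.
Qed.

Lemma sat_shiftn {AP : eqType} (w : word AP) (hv : wv w <> [::]) f i q :
  size (wu w) <= i -> (sat w (i + q * size (wv w)) f <-> sat w i f).
Proof.
move=> hi; elim: q => [|q IH]; first by rewrite mul0n addn0.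
have e : i + q.+1 * size (wv w) = (i + q * size (wv w)) + size (wv w) by rewrite mulSn; lia.
rewrite e; have := sat_shift hv f (i := i + q * size (wv w)) (leq_trans hi (leq_addr _ _)).
tauto.
Qed.

Lemma sat_agree {AP : eqType} (w : word AP) a b : wf_word w ->
  (forall i, i < size (wu w) + size (wv w) -> (sat w i a <-> sat w i b)) ->
  forall i, inlen w i -> (sat w i a <-> sat w i b).
Proof.
move=> hwf H i hi.
case E: (wv w) => [|x v'].
  by apply: H; rewrite E addn0; exact: hi E.
have hv : wv w <> [::] by rewrite E.
have hm : 0 < size (wv w) by rewrite E.
case: (ltnP i (size (wu w) + size (wv w))) => hlt; first exact: H.
set m := size (wv w) in hm hlt *.
set r := size (wu w) + (i - size (wu w)) %% m.
have ei : i = r + (i - size (wu w)) %/ m * m.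
  have := divn_eq (i - size (wu w)) m; rewrite /r; lia.
have hr : size (wu w) <= r := leq_addr _ _.
have hrl : r < size (wu w) + m by rewrite /r ltn_add2l ltn_pmod.
have := sat_shiftn hv a ((i - size (wu w)) %/ m) hr.
have := sat_shiftn hv b ((i - size (wu w)) %/ m) hr.
have := H r hrl. rewrite -/m -ei. tauto.
Qed.

Definition bP (Q : Prop) : bool := if excluded_middle_informative Q then true else false.

Lemma bP_iff (Q Q' : Prop) : bP Q = bP Q' -> (Q <-> Q').
Proof. by rewrite /bP; do 2 case: excluded_middle_informative => //; tauto. Qed.

Definition chr {AP : eqType} (S : seq (word AP)) (f : form AP) : seq bool :=
  flatten [seq [seq bP (sat w i f) | i <- iota 0 (size (wu w) + size (wv w))] | w <- S].

Lemma size_chr {AP : eqType} (S : seq (word AP)) f :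
  size (chr S f) = \sum_(w <- S) (size (wu w) + size (wv w)).
Proof.
rewrite /chr; elim: S => [|w S IH] /=; first by rewrite big_nil.
by rewrite big_cons size_cat size_map size_iota IH.
Qed.

Lemma flatten_inj (X : Type) (F G : X -> seq bool) (s : seq X) :
  (forall x, size (F x) = size (G x)) -> flatten (map F s) = flatten (map G s) ->
  forall x, List.In x s -> F x = G x.
Proof.
move=> hs; elim: s => [|a s IH] //= e x [<-|hx].
  by move/eqP: e; rewrite eqseq_cat // => /andP[/eqP ->].
by apply: IH => //; move/eqP: e; rewrite eqseq_cat // => /andP[_ /eqP].
Qed.

Lemma map_iota_eq (f g : nat -> bool) m :
  [seq f i | i <- iota 0 m] = [seq g i | i <- iota 0 m] -> forall i, i < m -> f i = g i.
Proof.
move=> e i hi; have := congr1 (fun s => nth false s i) e.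
by rewrite /= !(nth_map 0) ?size_iota // nth_iota.
Qed.

Lemma count_bound (s : seq (seq bool)) n :
  uniq s -> (forall x, x \in s -> size x = n) -> size s <= 2 ^ n.
Proof.
move=> us hs.
have e : size (pmap (insub : seq bool -> option (n.-tuple bool)) s) = size s.
  rewrite size_pmap_sub; apply/eqP; rewrite -all_count; apply/allP => x /hs ->.
  by rewrite eqxx.
rewrite -e; have /card_uniqP <- := pmap_sub_uniq (n.-tuple bool) us.
by apply: leq_trans (max_card _) _; rewrite card_tuple card_bool.
Qed.

Lemma collapse {T U : eqType} (f : T -> U) (s : seq T) x y :
  uniq s -> x \in s -> y \in s -> x != y -> f x = f y -> size (undup (map f s)) < size s.
Proof.
move=> us hx hy nxy e.
have : size (undup (map f s)) <= size (map f (rem y s)).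
  apply: uniq_leq_size; first exact: undup_uniq.
  move=> z; rewrite mem_undup => /mapP[u hu ->].
  case: (eqVneq u y) => [->|hne].
    by rewrite -e; apply: map_f; rewrite (mem_rem_uniq _ us) inE nxy hx.
  by apply: map_f; rewrite (mem_rem_uniq _ us) inE hne hu.
have hpos : 0 < size s by move: hy; case: (s).
by rewrite size_map size_rem // => h; apply: leq_ltn_trans h _; rewrite ltn_predL.
Qed.

Theorem corollary2 (AP : eqType) (HAP : inhabited AP) (L : op -> bool)
    (P N : seq (word AP)) :
  (forall w, List.In w (P ++ N) -> wf_word w) ->
  (exists phi : form AP, in_frag L phi /\ separating P N phi) ->
  exists phi : form AP,
    [/\ in_frag L phi, separating P N phi & sz phi <= 2 ^ sample_size P N].
Proof.
move=> hwf [phi0 [hL0 hsep0]].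
set n := sample_size P N.
suff H : forall k (phi : form AP), sz phi < k -> in_frag L phi -> separating P N phi ->
  exists phi' : form AP, [/\ in_frag L phi', separating P N phi' & sz phi' <= 2 ^ n].
  exact: (H (sz phi0).+1 phi0).
elim=> [//|k IH] phi hk hL hsep.
case: (leqP (sz phi) (2 ^ n)) => hle; first by exists phi.
set s := undup (subforms phi).
have hsz : sz phi = size s by [].
have nu : ~~ uniq (map (chr (P ++ N)) s).
  apply/negP => u.
  have := count_bound (n := n) u.
  have hsz' : forall x, x \in map (chr (P ++ N)) s -> size x = n.
    by move=> x /mapP[y _ ->]; rewrite size_chr.
  move=> /(_ hsz'); rewrite size_map -hsz => h.
  by rewrite ltnNge h in hle.
have [x [y [hx [hy [hxy hc]]]]] : exists x y, x \in s /\ y \in s /\ x <> y /\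
    chr (P ++ N) x = chr (P ++ N) y.
  apply: NNPP => Hn; move/negP: nu; apply.
  rewrite map_inj_in_uniq ?undup_uniq // => a b ha hb hab.
  apply: NNPP => hne; apply: Hn; by exists a, b.
have hsem : forall w, List.In w (P ++ N) -> forall i, inlen w i -> (sat w i x <-> sat w i y).
  move=> w hw; apply: sat_agree; first exact: hwf.
  move=> i hi; apply: bP_iff.
  have := @flatten_inj _
    (fun w => [seq bP (sat w i x) | i <- iota 0 (size (wu w) + size (wv w))])
    (fun w => [seq bP (sat w i y) | i <- iota 0 (size (wu w) + size (wv w))])
    (P ++ N) (fun z => ltac:(by rewrite !size_map)) hc w hw.
  by move/map_iota_eq; apply.
clear hc.
wlog hfs : x y hx hy hxy hsem / fsize x <= fsize y.
  move=> WL; case: (leqP (fsize x) (fsize y)) => h; first exact: (WL x y).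
  apply: (WL y x) => //; first by move=> e; apply: hxy.
    by move=> w hw i hi; apply: iff_sym; apply: hsem.
  exact: ltnW.
have ny : y \notin subforms x.
  apply/negP => h; have := sub_fsize_lt h (fun e => hxy (esym e)).
  by rewrite ltnNge hfs.
rewrite !mem_undup in hx hy.
have hLx : in_frag L x := in_frag_sub hx hL.
have hsem' : forall w, List.In w (P ++ N) -> inlen w 0 ->
    (sat w 0 (subst y x phi) <-> sat w 0 phi).
  by move=> w hw; apply: sat_subst => i hi; apply: hsem.
have hin0 : forall w, List.In w (P ++ N) -> inlen w 0.
  move=> w hw e; have := hwf w hw; rewrite /wf_word e cats0.
  by case: (wu w).
apply: (IH (subst y x phi)).
- have h1 : sz (subst y x phi) <= size (undup (map (subst y x) s)).
    apply: uniq_leq_size; first exact: undup_uniq.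
    move=> z; rewrite !mem_undup => /sub_subst; rewrite mem_cat => /orP[/mapP[u hu ->]|hz].
      by apply: map_f; rewrite mem_undup.
    have hzs : z \in subforms phi := sub_trans hz hx.
    have -> : z = subst y x z.
      rewrite subst_id //; apply/negP => hyz; move/negP: ny; apply.
      exact: sub_trans hyz hz.
    by apply: map_f; rewrite mem_undup.
  have h2 : size (undup (map (subst y x) s)) < size s.
    apply: (collapse (x := x) (y := y)); rewrite ?undup_uniq ?mem_undup //.
      by apply/eqP.
    by rewrite subst_self subst_id.
  by rewrite -ltnS; apply: leq_trans hk; rewrite ltnS hsz; apply: leq_trans h2.
- exact: in_frag_subst.
- split.
    move=> w hw; have hw' : List.In w (P ++ N) by apply: List.in_or_app; left.
    by apply/(hsem' w hw' (hin0 w hw')); apply: hsep.1.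
  move=> w hw; have hw' : List.In w (P ++ N) by apply: List.in_or_app; right.
  by move/(hsem' w hw' (hin0 w hw')); apply: hsep.2.
Qed.
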